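(* Let $\{x,y\}$ be a Cartesian coordinate system in the Euclidean plane $\mathbb{E}^2$ and let $z := \frac{1}{2}(x - i y)$. Let $\xi$ be a non-trivial global conformal Killing vector field (GCKV) of $\mathbb{E}^2$, and let $\mu_0,\mu_1,\mu_2 \in \mathbb{C}$ be the complex constants such that \[ \xi = \left(\mu_0 + \mu_1 z + \tfrac{1}{2}\mu_2 z^2\right)\partial_z + \left(\overline{\mu_0} + \overline{\mu_1}\,\overline{z} + \tfrac{1}{2}\overline{\mu_2}\,\overline{z}^2\right)\partial_{\overline{z}}. \] For $\mathbb{A} = \begin{pmatrix} \alpha & \beta \\ \gamma & \delta \end{pmatrix} \in SL(2,\mathbb{C})$ (i.e. $\alpha\delta - \beta\gamma = 1$), let $\chi^{\mathbb{A}}$ be the Möbius transformation $z \mapsto \frac{\alpha z + \beta}{\gamma z + \delta}$ of the Riemann sphere $\mathbb{C}\cup\{\infty\}$. Then the push-forward $\chi^{\mathbb{A}}_{\star}(\xi)$ is written in canonical form with respect to $\{x,y\}$, i.e. takes the form $(\mu_0' + z^2)\partial_z + (\overline{\mu_0'} + \overline{z}^2)\partial_{\overline{z}}$ for some $\mu_0' \in \mathbb{C}$, if and only if \[ \mathbb{A} = \begin{pmatrix} \frac{1}{2}(\delta\mu_2 - \gamma\mu_1) & \frac{1}{2}\delta\mu_1 - \gamma\mu_0 \\ \gamma & \delta \end{pmatrix}, \qquad \frac{1}{2}\delta^2\mu_2 - \gamma\delta\mu_1 + \gamma^2\mu_0 = 1. \] Moreover, for any such $\mathbb{A}$, \[ \chi^{\mathbb{A}}_{\star}(\xi)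 = \left(\tfrac{1}{4}\left(\sigma_{\{\mu\}} - i\tau_{\{\mu\}}\right) + z^2\right)\partial_z + \left(\tfrac{1}{4}\left(\sigma_{\{\mu\}} + i\tau_{\{\mu\}}\right) + \overline{z}^2\right)\partial_{\overline{z}}, \] where the real numbers $\sigma_{\{\mu\}}, \tau_{\{\mu\}}$ are defined by $\sigma_{\{\mu\}} - i\tau_{\{\mu\}} := 2\mu_0\mu_2 - \mu_1^2$.
   Context: A conformal Killing vector of $\mathbb{E}^2$ is called global (GCKV) if it extends smoothly to the one-point compactification (Riemann sphere) $\mathbb{S}^2$; in the complex coordinate $z = \frac{1}{2}(x-iy)$ these are exactly the vector fields of the form $(\mu_0 + \mu_1 z + \frac{1}{2}\mu_2 z^2)\partial_z + \text{c.c.}$ with $\mu_0,\mu_1,\mu_2\in\mathbb{C}$. Such a field is called canonical with respect to $\{x,y\}$ when $\mu_1 = 0$ and $\mu_2 = 2$. Under a Möbius transformation $\chi^{\mathbb{A}}$, $\mathbb{A} = \begin{pmatrix}\alpha&\beta\\\gamma&\delta\end{pmatrix}$, $\alpha\delta-\beta\gamma=1$, the parameters of $\chi^{\mathbb{A}}_{\star}(\xi)$ are $\mu_0' = \alpha^2\mu_0 - \alpha\beta\mu_1 + \frac{1}{2}\beta^2\mu_2$, $\mu_1' = -2\alpha\gamma\mu_0 + (\alpha\delta+\beta\gamma)\mu_1 - \beta\delta\mu_2$, $\mu_2' = 2\gamma^2\mu_0 - 2\gamma\delta\mu_1 + \delta^2\mu_2$, and the quantity $2\mu_0\mu_2 -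 \mu_1^2$ is invariant under this transformation. *)

(* Defs.v *)
(* Complex numbers: an arbitrary numClosedFieldType C
   (e.g. algC, or R[i] for a real closed R); conjugation is x^*, 'i is i. *)
From HB Require Import structures.
From mathcomp Require Import all_boot all_order all_algebra.
Set Implicit Arguments. Unset Strict Implicit. Unset Printing Implicit Defensive.
Import Order.TTheory GRing.Theory Num.Theory.
Local Open Scope ring_scope.

Section GCKV.
Variable C : numClosedFieldType.

(* A GCKV xi = F(z) d_z + G(z) d_zbar on E^2 = C (coordinate z = (x - i y)/2)
   is encoded by its two component functions. *)
Definition gckv_z (mu0 mu1 mu2 : C) (z : C) : C :=
  mu0 + mu1 * z + 2^-1 * mu2 * z ^+ 2.
Definition gckv_zb (mu0 mu1 mu2 : C) (z : C) : C :=
  mu0^* + mu1^* * z^* + 2^-1 * mu2^* * (z^*) ^+ 2.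

Definition mobius (a b c d z : C) : C := (a * z + b) / (c * z + d).
Definition mobius_deriv (a b c d z : C) : C := (a * d - b * c) / (c * z + d) ^+ 2.

Definition is_pushforward (a b c d : C) (F G f g : C -> C) : Prop :=
  forall z : C, c * z + d != 0 ->
    F (mobius a b c d z) = mobius_deriv a b c d z * f z /\
    G (mobius a b c d z) = (mobius_deriv a b c d z)^* * g z.

End GCKV.

(* Main.v *)
Require Import Defs.
From HB Require Import structures.
From mathcomp Require Import all_boot all_order all_algebra.
From mathcomp Require Import ring.
Import Order.TTheory GRing.Theory Num.Theory.
Local Open Scope ring_scope.

Section Aux.
Context {C : numClosedFieldType}.

Lemma key_fwd (a b c d m mu0 mu1 mu2 z : C) : a * d - b * c = 1 -> c * z + d != 0 ->
  m + mobius a b c d z ^+ 2 = mobius_deriv a b c d z * gckv_z mu0 mu1 mu2 z ->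
  (m * d ^+ 2 + b ^+ 2 - mu0) + (2 * m * c * d + 2 * a * b - mu1) * z
   + (m * c ^+ 2 + a ^+ 2 - 2^-1 * mu2) * z ^+ 2 = 0.
Proof.
move=> hd hu H.
transitivity ((m + mobius a b c d z ^+ 2 - mobius_deriv a b c d z * gckv_z mu0 mu1 mu2 z)
  * (c * z + d) ^+ 2).
  rewrite /mobius /mobius_deriv /gckv_z hd. by field.
by rewrite H subrr mul0r.
Qed.

Lemma key_bwd (a b c d m mu0 mu1 mu2 z : C) : a * d - b * c = 1 -> c * z + d != 0 ->
  (m * d ^+ 2 + b ^+ 2 - mu0) + (2 * m * c * d + 2 * a * b - mu1) * z
   + (m * c ^+ 2 + a ^+ 2 - 2^-1 * mu2) * z ^+ 2 = 0 ->
  m + mobius a b c d z ^+ 2 = mobius_deriv a b c d z * gckv_z mu0 mu1 mu2 z.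
Proof.
move=> hd hu H.
apply/eqP; rewrite -subr_eq0; apply/eqP.
transitivity (((m * d ^+ 2 + b ^+ 2 - mu0) + (2 * m * c * d + 2 * a * b - mu1) * z
   + (m * c ^+ 2 + a ^+ 2 - 2^-1 * mu2) * z ^+ 2) / (c * z + d) ^+ 2).
  rewrite /mobius /mobius_deriv /gckv_z hd. by field.
by rewrite H mul0r.
Qed.

Lemma interp (A0 A1 A2 e : C) :
  A0 + A1 * (e + 1) + A2 * (e + 1) ^+ 2 = 0 ->
  A0 + A1 * (e - 1) + A2 * (e - 1) ^+ 2 = 0 ->
  A0 + A1 * (e + 2) + A2 * (e + 2) ^+ 2 = 0 ->
  [/\ A0 = 0, A1 = 0 & A2 = 0].
Proof.
move=> h1 h2 h3.
have hA2 : A2 = - (A0 + A1 * (e + 1) + A2 * (e + 1) ^+ 2) / 2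
   + (A0 + A1 * (e - 1) + A2 * (e - 1) ^+ 2) / 6
   + (A0 + A1 * (e + 2) + A2 * (e + 2) ^+ 2) / 3 by field.
rewrite h1 h2 h3 in hA2.
have {}hA2 : A2 = 0 by rewrite hA2; ring.
subst A2.
have hA1 : A1 = ((A0 + A1 * (e + 1) + 0 * (e + 1) ^+ 2)
   - (A0 + A1 * (e - 1) + 0 * (e - 1) ^+ 2)) / 2 by field.
rewrite h1 h2 in hA1.
have {}hA1 : A1 = 0 by rewrite hA1; ring.
subst A1.
split => //.
by rewrite -h1; ring.
Qed.

Lemma conj_gckv (mu0 mu1 mu2 z : C) : gckv_zb mu0 mu1 mu2 z = (gckv_z mu0 mu1 mu2 z)^*.
Proof.
rewrite /gckv_zb /gckv_z !(rmorphD, rmorphM, rmorphXn, fmorphV) /=.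
by rewrite rmorph1.
Qed.

Lemma push_of (a b c d m mu0 mu1 mu2 : C) :
  (forall z, c * z + d != 0 ->
    m + mobius a b c d z ^+ 2 = mobius_deriv a b c d z * gckv_z mu0 mu1 mu2 z) ->
  is_pushforward a b c d (fun w => m + w ^+ 2) (fun w => m^* + (w^*) ^+ 2)
    (gckv_z mu0 mu1 mu2) (gckv_zb mu0 mu1 mu2).
Proof.
move=> H z hz; split; first exact: H.
by rewrite conj_gckv -rmorphM -H // rmorphD rmorphXn.
Qed.

Lemma push_ok (a b c d m mu0 mu1 mu2 : C) : a * d - b * c = 1 ->
  a = 2^-1 * (d * mu2 - c * mu1) ->
  b = 2^-1 * d * mu1 - c * mu0 ->
  2^-1 * d ^+ 2 * mu2 - c * d * mu1 + c ^+ 2 * mu0 = 1 ->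
  m = 4^-1 * (2 * mu0 * mu2 - mu1 ^+ 2) ->
  is_pushforward a b c d (fun w => m + w ^+ 2) (fun w => m^* + (w^*) ^+ 2)
    (gckv_z mu0 mu1 mu2) (gckv_zb mu0 mu1 mu2).
Proof.
move=> hd ha hb hK hm; apply: push_of => z hz.
apply: key_bwd => //.
transitivity ((2^-1 * d ^+ 2 * mu2 - c * d * mu1 + c ^+ 2 * mu0 - 1)
   * gckv_z mu0 mu1 mu2 z).
  rewrite hm ha hb /gckv_z; by field.
by rewrite hK subrr mul0r.
Qed.

Lemma final (a b c d m mu0 mu1 mu2 : C) : a * d - b * c = 1 ->
  m * d ^+ 2 + b ^+ 2 - mu0 = 0 ->
  2 * m * c * d + 2 * a * b - mu1 = 0 ->
  m * c ^+ 2 + a ^+ 2 - 2^-1 * mu2 = 0 ->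
  a = 2^-1 * (d * mu2 - c * mu1) /\
  b = 2^-1 * d * mu1 - c * mu0 /\
  2^-1 * d ^+ 2 * mu2 - c * d * mu1 + c ^+ 2 * mu0 = 1.
Proof.
move=> hd h0 h1 h2.
split; last split; apply/eqP; rewrite -subr_eq0; apply/eqP.
- transitivity (a * (1 - (a * d - b * c)) + d * (m * c ^+ 2 + a ^+ 2 - 2^-1 * mu2)
     - c * (2 * m * c * d + 2 * a * b - mu1) / 2); first by field.
  by rewrite hd h1 h2; ring.
- transitivity (b * (1 - (a * d - b * c)) + d * (2 * m * c * d + 2 * a * b - mu1) / 2
     - c * (m * d ^+ 2 + b ^+ 2 - mu0)); first by field.
  by rewrite hd h1 h0; ring.
- transitivity (((a * d - b * c) ^+ 2 - 1) - (d ^+ 2 * (m * c ^+ 2 + a ^+ 2 - 2^-1 * mu2)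
     - c * d * (2 * m * c * d + 2 * a * b - mu1) + c ^+ 2 * (m * d ^+ 2 + b ^+ 2 - mu0)));
    first by field.
  by rewrite hd h0 h1 h2; ring.
Qed.

End Aux.

Theorem proposition7p2 (C : numClosedFieldType) (mu0 mu1 mu2 : C)
  (alpha beta gamma delta : C)
  (hnontriv : [|| mu0 != 0, mu1 != 0 | mu2 != 0])
  (hdet : alpha * delta - beta * gamma = 1) :
  ((exists mu0' : C,
      is_pushforward alpha beta gamma delta
        (fun w => mu0' + w ^+ 2) (fun w => mu0'^* + (w^*) ^+ 2)
        (gckv_z mu0 mu1 mu2) (gckv_zb mu0 mu1 mu2))
   <->
   (alpha = 2^-1 * (delta * mu2 - gamma * mu1) /\
    beta = 2^-1 * delta * mu1 - gamma * mu0 /\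
    2^-1 * delta ^+ 2 * mu2 - gamma * delta * mu1 + gamma ^+ 2 * mu0 = 1))
  /\
  (alpha = 2^-1 * (delta * mu2 - gamma * mu1) ->
   beta = 2^-1 * delta * mu1 - gamma * mu0 ->
   2^-1 * delta ^+ 2 * mu2 - gamma * delta * mu1 + gamma ^+ 2 * mu0 = 1 ->
   forall sigma tau : C, sigma \is Num.real -> tau \is Num.real ->
   sigma - 'i * tau = 2 * mu0 * mu2 - mu1 ^+ 2 ->
   is_pushforward alpha beta gamma delta
     (fun w => 4^-1 * (sigma - 'i * tau) + w ^+ 2)
     (fun w => 4^-1 * (sigma + 'i * tau) + (w^*) ^+ 2)
     (gckv_z mu0 mu1 mu2) (gckv_zb mu0 mu1 mu2)).
Proof.
split.
  split.
    case=> m H.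
    have [e he] : exists e : C, forall s : C, s != 0 -> gamma * (e + s) + delta != 0.
      have [hg|hc] := eqVneq gamma 0.
        exists 0 => s _; rewrite hg mul0r add0r.
        apply/eqP => hd0; move: hdet; rewrite hd0 hg !mulr0 subr0 => /eqP.
        by rewrite eq_sym oner_eq0.
      exists (- delta / gamma) => s hs.
      have -> : gamma * (- delta / gamma + s) + delta = gamma * s by field.
      by rewrite mulf_neq0.
    have P (s : C) (hs : s != 0) := @key_fwd C alpha beta gamma delta m mu0 mu1 mu2 (e+s) hdet (he s hs) (proj1 (H _ (he s hs))).
    have n1 : (-1 : C) != 0 by rewrite oppr_eq0 oner_neq0.
    have n2 : (2 : C) != 0 by rewrite pnatr_eq0.
    have [h0 h1 h2] := @interp C _ _ _ _ (P 1 (oner_neq0 _)) (P (-1) n1) (P 2 n2).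
    exact: (@final C alpha beta gamma delta m mu0 mu1 mu2 hdet h0 h1 h2).
  case=> ha [hb hK].
  by exists (4^-1 * (2 * mu0 * mu2 - mu1 ^+ 2)); apply: push_ok.
move=> ha hb hK sigma tau hs ht hst.
have E : 4^-1 * (sigma + 'i * tau) = (4^-1 * (sigma - 'i * tau))^*.
  rewrite !(rmorphM, rmorphB, fmorphV) /= conjCi (conj_Creal hs) (conj_Creal ht).
  by rewrite (rmorph_nat _ 4) mulNr opprK.
rewrite E.
by apply: push_ok => //; rewrite hst.
Qed.
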